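(* Let $G$ be a graph such that two or more edges join vertices $v$ and $w$. If $e$ is one of these edges, then $\mathrm{usp}(G\backslash e)\geq \mathrm{usp}(G)$ and $\mathrm{sp}(G\backslash e)\leq \mathrm{sp}(G)$. Moreover, if three or more edges join $v$ and $w$, then $\mathrm{usp}(G\backslash e)=\mathrm{usp}(G)$ and $\mathrm{sp}(G\backslash e)=\mathrm{sp}(G)$.
   Context: All graphs are finite, have at least one vertex, have no loops, and may have multiple (parallel) edges. $G\backslash e$ denotes deletion of edge $e$. A unique shortest path is a shortest $u$–$v$ path $P$ such that every $u$–$v$ path with the same number of vertices is identical to $P$, where two paths with different edge sequences are different even if their vertex sequences agree; a single vertex is a unique shortest path. The parade number $\mathrm{usp}(G)$ is the largest number of vertices of a unique shortest path in $G$. The spectator number is $\mathrm{sp}(G)=|V(G)|-\mathrm{usp}(G)$. *)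

(* Defs.v *)
From mathcomp Require Import all_boot.
From mathcomp Require Import boolp.

Set Implicit Arguments.
Unset Strict Implicit.
Unset Printing Implicit Defensive.

(* A multigraph: vertex type V (finite), an ambient finite type Eu of edge
   names with endpoint maps s t : Eu -> V, and the set A : {set Eu} of edges
   actually present.  Edges are undirected: edge f joins s f and t f.
   Deleting edge e from the graph (A,s,t) gives (A :\ e, s, t). *)

Section MGraph.
Variables (V Eu : finType) (s t : Eu -> V).

Definition joins (f : Eu) (x y : V) : bool :=
  ((s f == x) && (t f == y)) || ((s f == y) && (t f == x)).

(* A walk starting at x, given as the sequence of (edge, next vertex) pairs.
   Two walks are equal iff they have the same vertex and edge sequences. *)
Fixpoint is_walk (A : {set Eu}) (x : V) (p : seq (Eu * V)) : bool :=
  match p with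
  | [::] => true
  | (f, y) :: p' => [&& f \in A, joins f x y & is_walk A y p']
  end.

Definition wverts (x : V) (p : seq (Eu * V)) : seq V := x :: map snd p.

Definition nverts (x : V) (p : seq (Eu * V)) : nat := size (wverts x p).

Definition is_path (A : {set Eu}) (u v : V) (x : V) (p : seq (Eu * V)) : Prop :=
  x = u /\ is_walk A x p /\ uniq (wverts x p) /\ last x (map snd p) = v.

Definition is_usp (A : {set Eu}) (u v : V) (p : seq (Eu * V)) : Prop :=
  is_path A u v u p /\
  (forall q, is_path A u v u q -> nverts u p <= nverts u q) /\
  (forall q, is_path A u v u q -> nverts u q = nverts u p -> q = p).

(* the parade number: largest number of vertices of a unique shortest path
   (paths have distinct vertices, so this number is at most #|V|) *)
Definition usp (A : {set Eu}) : nat :=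
  \max_(k < #|V|.+1 | `[< exists u v p, is_usp A u v p /\ nverts u p = k >]) k.

Definition sp (A : {set Eu}) : nat := #|V| - usp A.

End MGraph.

(* Main.v *)
Require Import Defs.
From mathcomp Require Import all_boot.
From mathcomp Require Import boolp.
Set Implicit Arguments.
Unset Strict Implicit.

Section Aux.
Variables (V Eu : finType) (s t : Eu -> V).

Definition swp (h h' : Eu) (z : Eu * V) : Eu * V :=
  (if z.1 == h then h' else z.1, z.2).

Lemma joins_tr h h' v w x y : joins s t h v w -> joins s t h x y ->
  joins s t h' v w -> joins s t h' x y.
Proof.
rewrite /joins.
move=> /orP[/andP[/eqP-> /eqP->]|/andP[/eqP-> /eqP->]]
  /orP[/andP[/eqP<- /eqP<-]|/andP[/eqP<- /eqP<-]]
  /orP[/andP[/eqP-> /eqP->]|/andP[/eqP-> /eqP->]]; by rewrite !eqxx ?orbT.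
Qed.

Lemma swap_walk (A B : {set Eu}) h h' (hB : h' \in B)
  (sub : forall f, f \in A -> f != h -> f \in B)
  (hj : forall x y, joins s t h x y -> joins s t h' x y) x p :
  is_walk s t A x p -> is_walk s t B x (map (swp h h') p).
Proof.
elim: p x => [|[f y] p IH] x //=.
case/and3P => fA jf wp; rewrite /swp /=.
case: eqP => [E|/eqP ne]; apply/and3P; split; try exact: IH.
- exact: hB.
- by apply: hj; rewrite -E.
- exact: sub.
- exact: jf.
Qed.

Lemma swap_snd h h' p : map snd (map (swp h h') p) = map snd p.
Proof. by rewrite -map_comp. Qed.

Lemma walk_in (A : {set Eu}) x p z : is_walk s t A x p -> z \in p -> z.1 \in A.
Proof.
elim: p x => [|[f0 y0] q IH] u0 //= /and3P[f0B _ wq].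
rewrite inE => /orP[/eqP->//|]; exact: IH wq.
Qed.

Lemma walk_sub (A B : {set Eu}) x p : is_walk s t A x p ->
  (forall z, z \in p -> z.1 \in B) -> is_walk s t B x p.
Proof.
elim: p x => [|[f y] p IH] x //= /and3P[_ j wp] H.
apply/and3P; split => //.
- by apply: (H (f, y)); rewrite inE eqxx.
- by apply: IH => // z zp; apply: H; rewrite inE zp orbT.
Qed.

Lemma swap_path (A B : {set Eu}) h h' (hB : h' \in B)
  (sub : forall f, f \in A -> f != h -> f \in B)
  (hj : forall x y, joins s t h x y -> joins s t h' x y) u x q :
  is_path s t A u x u q -> is_path s t B u x u (map (swp h h') q)
   /\ nverts u (map (swp h h') q) = nverts u q.
Proof.
case=> _ [wq [uq lq]].
rewrite /is_path /nverts /wverts !swap_snd; do ! split => //.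
exact: swap_walk wq.
Qed.

Lemma two_pick (B : {set Eu}) v w :
  2 <= #|[set f in B | joins s t f v w]| ->
  forall h, exists h', [/\ h' \in B, joins s t h' v w & h' != h].
Proof.
move=> two h.
have : 0 < #|[set f in B | joins s t f v w] :\ h|.
  move: two; rewrite (cardsD1 h [set f in B | joins s t f v w]).
  move: (h \in _) => b; case: b => //= H; exact: ltnW.
case/card_gt0P => h'; rewrite !inE => /and3P[ne hB j].
by exists h'.
Qed.

Lemma usp_avoid (B : {set Eu}) v w
  (pick : forall h, exists h', [/\ h' \in B, joins s t h' v w & h' != h])
  u x p : is_usp s t B u x p -> forall z, z \in p -> ~~ joins s t z.1 v w.
Proof.
case=> pp [_ uniqp] [h y] zp /=; apply/negP => jh.
have [h' [h'B jh' ne]] := pick h.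
have hB : h \in B.
  case: pp => _ [wp _].
  elim: p u wp zp {uniqp} => [|[f0 y0] p IH] u0 //= /and3P[f0B _ wp].
  rewrite inE => /orP[/eqP[-> _]//|]; exact: IH wp.
have [pq nq] := swap_path (A:=B) h'B (fun f fB _ => fB)
   (fun x0 y0 j => joins_tr jh j jh') pp.
have E := uniqp _ pq nq.
have : {in p, swp h h' =1 id} by apply/eq_in_map; rewrite map_id.
move/(_ _ zp); rewrite /swp /= eqxx => [[]] /eqP; by rewrite (negbTE ne).
Qed.

Lemma usp_mono (A B : {set Eu}) :
  (forall u x p, is_usp s t A u x p -> is_usp s t B u x p) ->
  usp s t A <= usp s t B.
Proof.
move=> H; rewrite /usp; apply/bigmax_leqP => i /asboolP [u [x [p [up np]]]].
apply: leq_bigmax_cond; apply/asboolP; exists u, x, p; split => //.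
exact: H.
Qed.

End Aux.

Theorem lemma6p8 (V Eu : finType) (s t : Eu -> V) (A : {set Eu})
    (noloop : forall f, f \in A -> s f != t f)
    (v w : V) (e : Eu) (eA : e \in A) (evw : joins s t e v w)
    (two : 2 <= #|[set f in A | joins s t f v w]|) :
  (usp s t A <= usp s t (A :\ e) /\ sp s t (A :\ e) <= sp s t A) /\
  (3 <= #|[set f in A | joins s t f v w]| ->
     usp s t (A :\ e) = usp s t A /\ sp s t (A :\ e) = sp s t A).
Proof.
have subA : forall u x q, is_path s t (A :\ e) u x u q -> is_path s t A u x u q.
  move=> u x q [a [b c]]; split => //; split => //.
  apply: (walk_sub b) => z zq.
  by have := walk_in b zq; rewrite inE => /andP[].
have P1 : usp s t A <= usp s t (A :\ e).
  apply: usp_mono => u x p up.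
  have av := usp_avoid (two_pick two) up.
  case: up => [[a [b c]] [sh un]].
  split; first (split => //; split => //).
    apply: (walk_sub b) => z zp; rewrite !inE; apply/andP; split.
      apply/eqP => ez; move: (av z zp); by rewrite ez evw.
    exact: walk_in b zp.
  split => q qp; [exact: sh (subA _ _ _ qp) | exact: un (subA _ _ _ qp)].
have spm : forall a b, a <= b -> #|V| - b <= #|V| - a.
  by move=> a b ab; apply: leq_sub2l.
split; first by split => //; exact: spm.
move=> three.
have two' : 2 <= #|[set f in A :\ e | joins s t f v w]|.
  have -> : [set f in A :\ e | joins s t f v w] = [set f in A | joins s t f v w] :\ e.
    by apply/setP => z; rewrite !inE andbA.
  move: three; rewrite (cardsD1 e [set f in A | joins s t f v w]) !inE eA evw /=.
  by [].
have P2 : usp s t (A :\ e) <= usp s t A.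
  apply: usp_mono => u x p up.
  have av := usp_avoid (two_pick two') up.
  have [f [fB jf _]] := two_pick two' e.
  have sub : forall g, g \in A -> g != e -> g \in A :\ e.
    by move=> g gA ge; rewrite !inE ge gA.
  have hj : forall x0 y0, joins s t e x0 y0 -> joins s t f x0 y0 := fun x0 y0 j => joins_tr evw j jf.
  case: up => [pp [sh un]].
  split; first exact: subA.
  split => q qp.
    have [qp' nq] := swap_path (A:=A) fB sub hj qp.
    by rewrite -nq; exact: sh.
  move=> nqp.
  have [qp' nq] := swap_path (A:=A) fB sub hj qp.
  have E := un _ qp' (etrans nq nqp).
  have noe : forall z, z \in q -> z.1 != e.
    move=> [g y] zq /=; apply/eqP => ge.
    have : swp e f (g, y) \in p by rewrite -E; apply: map_f.
    rewrite /swp /= ge eqxx => /av /=; by rewrite jf.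
  rewrite -E -{1}(map_id q); apply/eq_in_map => z zq.
  by rewrite /swp (negbTE (noe z zq)); case: z zq.
have Eq : usp s t (A :\ e) = usp s t A by apply/eqP; rewrite eqn_leq P1 P2.
by rewrite /sp Eq.
Qed.
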